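(* Let $n\in\mathbb N$ and let $G\subset H$ be subgroups of the symmetric group $S_n$. If for a ballean $X$ the $G$-symmetric power $[X]^n_G$ is normal, then the $H$-symmetric power $[X]^n_H$ is normal.
   Context: A ballean is a pair $(X,\mathcal E_X)$ where $X$ is a set and $\mathcal E_X$ is a family of subsets of $X\times X$ (entourages) such that: each $E\in\mathcal E_X$ contains the diagonal $\Delta_X$; for any $E,F\in\mathcal E_X$ there is $D\in\mathcal E_X$ with $E\circ F^{-1}\subset D$; and $\bigcup\mathcal E_X=X\times X$. For $E\in\mathcal E_X$, $x\in X$, $A\subset X$: $E[x]=\{y:(x,y)\in E\}$, $E[A]=\bigcup_{a\in A}E[a]$. $B\subset X$ is bounded if $B\subset E[x]$ for some $E\in\mathcal E_X$, $x\in X$; $\mathcal B_X$ is the family of bounded sets. Sets $A,B$ are asymptotically disjoint if $E[A]\cap E[B]\in\mathcal B_X$ for all $E\in\mathcal E_X$; $U$ is an asymptotic neighborhood of $A$ if $E[A]\setminus U\in\mathcal B_X$ for all $E$; $X$ is normal if any two asymptotically disjoint sets have disjoint asymptotic neighborhoods. The power $X^n$ ($n=\{0,\dots,n-1\}$) has entourages $\{(x,y)\in X^n\times X^n:(x(i),y(i))\in E_i\ \forall i\}$, $E_i\in\mathcal E_X$. For a subgroup $G\subset S_n$, $[X]^n_G=\{xG:x\in X^n\}$ where $xG=\{x\circ g:g\in G\}$, with entourages $\hat E=\{(xG,yG):(x,y)\in E\}$ for $E$ an entourage of $X^n$. *)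

(* Defs.v *)
From mathcomp Require Import all_boot all_fingroup.
Set Implicit Arguments. Unset Strict Implicit. Unset Printing Implicit Defensive.

Section Ballean.
Variable T : Type.
Variable ent : (T -> T -> Prop) -> Prop.

Definition comp_inv (E F : T -> T -> Prop) : T -> T -> Prop :=
  fun x z => exists y, E x y /\ F z y.

Definition is_ballean : Prop :=
  [/\ (forall E, ent E -> forall x, E x x),
      (forall E F, ent E -> ent F -> exists D, ent D /\
          forall x z, comp_inv E F x z -> D x z)
    & (forall x y, exists E, ent E /\ E x y)].

Definition ball (E : T -> T -> Prop) (A : T -> Prop) : T -> Prop :=
  fun y => exists2 a, A a & E a y.

Definition bounded (B : T -> Prop) : Prop :=
  exists E x, ent E /\ forall y, B y -> E x y.

Definition asym_disjoint (A B : T -> Prop) : Prop :=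
  forall E, ent E -> bounded (fun y => ball E A y /\ ball E B y).

Definition asym_nbhd (U A : T -> Prop) : Prop :=
  forall E, ent E -> bounded (fun y => ball E A y /\ ~ U y).

Definition normal_ballean : Prop :=
  forall A B, asym_disjoint A B ->
    exists U V, [/\ asym_nbhd U A, asym_nbhd V B & forall y, ~ (U y /\ V y)].
End Ballean.

Section SymPower.
Variables (X : Type) (ent : (X -> X -> Prop) -> Prop) (n : nat).

Definition pow_ent : (('I_n -> X) -> ('I_n -> X) -> Prop) -> Prop :=
  fun R => exists Es : 'I_n -> X -> X -> Prop,
    (forall i, ent (Es i)) /\ R = (fun x y => forall i, Es i (x i) (y i)).

Definition orb (G : {group {perm 'I_n}}) (x : 'I_n -> X) : ('I_n -> X) -> Prop :=
  fun y => exists2 g, g \in G & y = x \o g.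

Definition sympow (G : {group {perm 'I_n}}) : Type :=
  {S : ('I_n -> X) -> Prop | exists x, S = orb G x}.

Definition sym_ent (G : {group {perm 'I_n}}) :
    (sympow G -> sympow G -> Prop) -> Prop :=
  fun R => exists E, pow_ent E /\
    R = (fun S S' => exists x y,
           [/\ proj1_sig S = orb G x, proj1_sig S' = orb G y & E x y]).
End SymPower.
Arguments pow_ent {X} ent n.
Arguments sym_ent {X} ent {n} G.
Arguments sympow X {n} G.

(* Main.v *)
Require Import Defs.
From mathcomp Require Import all_boot all_fingroup.
From Stdlib Require Import FunctionalExtensionality PropExtensionality ProofIrrelevance Classical ClassicalEpsilon.
Set Implicit Arguments. Unset Strict Implicit. Unset Printing Implicit Defensive.

Section Helpers.
Variables (X : Type) (ent : (X -> X -> Prop) -> Prop) (n : nat).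
Hypothesis hb : is_ballean ent.

Lemma inv_ent F : ent F -> exists D, ent D /\ forall x y, F x y -> D y x.
Proof.
case: hb => refl comp _ hF.
have [D [hD hDc]] := comp F F hF hF.
exists D; split => // x y Fxy; apply: hDc; exists y; split => //; exact: refl.
Qed.

Lemma union_ent E F : ent E -> ent F -> exists D, ent D /\
  (forall x y, E x y -> D x y) /\ (forall x y, F x y -> D x y).
Proof.
move=> hE hF; case: hb => refl comp _.
have [Fi [hFi hFic]] := inv_ent hF.
have [D [hD hDc]] := comp E Fi hE hFi.
exists D; split => //; split => x y H.
- apply: hDc; exists y; split => //; exact: refl.
- apply: hDc; exists x; split; [exact: refl| exact: hFic].
Qed.

Lemma fin_ent (I : finType) (Q : I -> (X -> X -> Prop) -> Prop) :
  (forall i, exists E, ent E /\ forall F, (forall x y, E x y -> F x y) -> Q i F) ->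
  forall E0, ent E0 -> exists D, ent D /\ (forall x y, E0 x y -> D x y) /\ forall i, Q i D.
Proof.
move=> hQ E0 hE0.
suff Hs : forall l : seq I, exists D, ent D /\ (forall x y, E0 x y -> D x y) /\
   forall i, i \in l -> forall F, (forall x y, D x y -> F x y) -> Q i F.
  have [D [hD [h0 hl]]] := Hs (enum I).
  exists D; split => //; split => // i; apply: (hl i) => //; by rewrite mem_enum.
elim => [|a l [D [hD [h0 hl]]]].
  by exists E0; split => //; split.
have [E [hE hEQ]] := hQ a.
have [D' [hD' [h1 h2]]] := union_ent hD hE.
exists D'; split => //; split; first by move=> x y /h0 /h1.
move=> i; rewrite in_cons => /orP [/eqP -> | il] F hF.
  by apply: hEQ => x y /h2 /hF.
by apply: (hl i il) => x y /h1 /hF.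
Qed.

Lemma fun_choice (P : 'I_n -> (X -> X -> Prop) -> Prop) :
  (forall j, exists D, P j D) -> exists Ks, forall j, P j (Ks j).
Proof.
move=> h; exists (fun j => proj1_sig (constructive_indefinite_description _ (h j))).
move=> j; exact: proj2_sig (constructive_indefinite_description _ (h j)).
Qed.

Lemma near_lemma (Fs : 'I_n -> X -> X -> Prop) (hFs : forall i, ent (Fs i))
   (z : 'I_n -> X) j : exists D, ent D /\ forall k m b, Fs m (z k) b -> D (z j) b.
Proof.
case: hb => refl comp conn.
have [C [hC [_ hCz]]] : exists D, ent D /\ (forall x y, Fs j x y -> D x y) /\
    forall k, D (z j) (z k).
  apply: (@fin_ent _ (fun k F => F (z j) (z k))) (hFs j) => k.
  have [E [hE hE']] := conn (z j) (z k).
  by exists E; split => // F hF; apply: hF.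
have [M [hM [_ hMz]]] : exists D, ent D /\ (forall x y, Fs j x y -> D x y) /\
    forall m a b, Fs m a b -> D b a.
  apply: (@fin_ent _ (fun m F => forall a b, Fs m a b -> F b a)) (hFs j) => m.
  have [E [hE hE']] := inv_ent (hFs m).
  by exists E; split => // F hF a b h; apply: hF; apply: hE'.
have [D [hD hDc]] := comp C M hC hM.
exists D; split => // k m b hF; apply: hDc; exists (z k); split; [exact: hCz| exact: hMz hF].
Qed.

End Helpers.

Section Orb.
Variables (X : Type) (n : nat).

Lemma orb_self (K : {group {perm 'I_n}}) (x : 'I_n -> X) : orb K x x.
Proof.
exists 1%g; first exact: group1.
by apply: functional_extensionality => i /=; rewrite perm1.
Qed.

Lemma orbE (K : {group {perm 'I_n}}) (x y : 'I_n -> X) :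
  orb K x = orb K y -> exists2 k, k \in K & y = x \o k.
Proof. by move=> e; have := orb_self K y; rewrite -e. Qed.

Lemma orb_eq (K : {group {perm 'I_n}}) (x : 'I_n -> X) k :
  k \in K -> orb K x = orb K (x \o k).
Proof.
move=> kK; apply: functional_extensionality => w; apply: propositional_extensionality.
split => [[g gK ->]|[g gK ->]].
  exists (g * k^-1)%g; first by rewrite groupM ?groupV.
  by apply: functional_extensionality => i /=; rewrite permM permKV.
exists (g * k)%g; first by rewrite groupM.
by apply: functional_extensionality => i /=; rewrite permM.
Qed.

Lemma orb_sub (G H : {group {perm 'I_n}}) (x y : 'I_n -> X) :
  G \subset H -> orb G x = orb G y -> orb H x = orb H y.
Proof.
move=> sGH /orbE [k kG ->]; apply: orb_eq; exact: (subsetP sGH).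
Qed.

Definition qq (K : {group {perm 'I_n}}) (x : 'I_n -> X) : sympow X K :=
  exist _ (orb K x) (ex_intro _ x erefl).

Lemma sympow_eq (K : {group {perm 'I_n}}) (S T : sympow X K) :
  proj1_sig S = proj1_sig T -> S = T.
Proof.
case: S => s ps; case: T => t pt /= e; subst t; f_equal; apply: proof_irrelevance.
Qed.

End Orb.

Section Main.
Variables (n : nat) (G H : {group {perm 'I_n}}) (X : Type)
    (ent : (X -> X -> Prop) -> Prop).
Hypotheses (sGH : G \subset H) (hb : is_ballean ent).

Definition pre (A : sympow X H -> Prop) : sympow X G -> Prop :=
  fun T => exists x0, proj1_sig T = orb G x0 /\ A (qq H x0).

Definition Uof (U' : sympow X G -> Prop) : sympow X H -> Prop :=
  fun S => forall x, proj1_sig S = orb H x -> U' (qq G x).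

Lemma qqH_eq (x y : 'I_n -> X) : orb G x = orb G y -> qq H x = qq H y.
Proof. move=> e; apply: sympow_eq => /=; exact: orb_sub sGH e. Qed.

Lemma ball_pre (A : sympow X H -> Prop) Es T :
  ball (fun S S' => exists x y, [/\ proj1_sig S = orb G x, proj1_sig S' = orb G y
         & forall i, Es i (x i) (y i)]) (pre A) T ->
  exists y, proj1_sig T = orb G y /\
  ball (fun S S' => exists x y, [/\ proj1_sig S = orb H x, proj1_sig S' = orb H y
         & forall i, Es i (x i) (y i)]) A (qq H y).
Proof.
case=> a [x0 [ha hA]] [x [y [hax hTy hE]]].
exists y; split => //; exists (qq H x0) => //.
exists x, y; split => //=; apply: (orb_sub sGH); by rewrite -ha -hax.
Qed.

Lemma disj_pull A B : asym_disjoint (sym_ent ent H) A B ->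
  asym_disjoint (sym_ent ent G) (pre A) (pre B).
Proof.
move=> hAB R [E [[Es [hEs ->]] ->]].
have [F [c [[F0 [[Fs [hFs ->]] ->]] hc]]] :=
  hAB (fun S S' => exists x y, [/\ proj1_sig S = orb H x, proj1_sig S' = orb H y
         & forall i, Es i (x i) (y i)])
    (ex_intro _ _ (conj (ex_intro _ Es (conj hEs erefl)) erefl)).
case: c hc => cS [z hzc] hc.
have [Ks hKs] := @fun_choice _ _ (fun j D => ent D /\ forall k m b, Fs m (z k) b -> D (z j) b)
   (near_lemma hb hFs z).
exists (fun S S' => exists x y, [/\ proj1_sig S = orb G x, proj1_sig S' = orb G y
         & forall i, Ks i (x i) (y i)]), (qq G z).
split.
  exists (fun x y => forall i, Ks i (x i) (y i)); split => //.
  exists Ks; split => // i; exact: (hKs i).1.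
move=> T [/ball_pre [y [hTy hbA]] /ball_pre [y' [hTy' hbB]]].
have e : qq H y' = qq H y by apply: qqH_eq; rewrite -hTy -hTy'.
rewrite e in hbB.
have [z' [y'' [/= hz hy hF]]] := hc (qq H y) (conj hbA hbB).
have [h1 h1H ez] := orbE (etrans (esym hzc) hz).
have [h2 h2H ey] := orbE hy.
exists z, y; split => // i.
apply: ((hKs i).2 (h1 ((h2^-1)%g i)) ((h2^-1)%g i)).
have := hF ((h2^-1)%g i); rewrite ez ey /= permKV; exact.
Qed.

Lemma nbhd_push A U' : asym_nbhd (sym_ent ent G) U' (pre A) ->
  asym_nbhd (sym_ent ent H) (Uof U') A.
Proof.
move=> hU R [E [[Es [hEs ->]] ->]].
have [Ks hKs] : exists Ks : 'I_n -> X -> X -> Prop, forall i, ent (Ks i) /\ forall j a b, Es j a b -> Ks i a b.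
  apply: (@fun_choice _ _ (fun i D => ent D /\ forall j a b, Es j a b -> D a b)) => i.
  have [D [hD [_ hDQ]]] : exists D, ent D /\ (forall x y, Es i x y -> D x y) /\
      forall j a b, Es j a b -> D a b.
    apply: (@fin_ent _ _ hb _ (fun j F => forall a b, Es j a b -> F a b)) (hEs i) => j.
    by exists (Es j); split => // F hF.
  by exists D.
have [F [c [[F0 [[Fs [hFs ->]] ->]] hc]]] :=
  hU (fun S S' => exists x y, [/\ proj1_sig S = orb G x, proj1_sig S' = orb G y
         & forall i, Ks i (x i) (y i)])
    (ex_intro _ _ (conj (ex_intro _ Ks (conj (fun i => (hKs i).1) erefl)) erefl)).
case: c hc => cS [z hzc] hc.
exists (fun S S' => exists x y, [/\ proj1_sig S = orb H x, proj1_sig S' = orb H y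
         & forall i, Fs i (x i) (y i)]), (qq H z).
split.
  exists (fun x y => forall i, Fs i (x i) (y i)); split => //.
  by exists Fs; split.
move=> S [[a ha [x [y [hax hSy hE]]]] hnU].
have [w hw] : exists w, ~ (proj1_sig S = orb H w -> U' (qq G w)).
  by apply: not_all_ex_not.
have [hSw hnw] : proj1_sig S = orb H w /\ ~ U' (qq G w).
  split; first by apply: NNPP => hn; apply: hw => /hn.
  by move=> hu; apply: hw.
have [h hH ew] := orbE (etrans (esym hSy) hSw).
have hball : ball (fun S S' => exists x y, [/\ proj1_sig S = orb G x, proj1_sig S' = orb G y
         & forall i, Ks i (x i) (y i)]) (pre A) (qq G w).
  exists (qq G (x \o h)).
    exists (x \o h); split => //.
    suff -> : qq H (x \o h) = a by [].
    by apply: sympow_eq => /=; rewrite hax -orb_eq.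
  exists (x \o h), w; split => // i; rewrite ew /=.
  exact: (hKs i).2 _ _ _ (hE (h i)).
have [z' [y' [/= hz hy hF]]] := hc (qq G w) (conj hball hnw).
exists z', y'; split => //.
  exact: orb_sub sGH (etrans (esym hzc) hz).
rewrite hSw; exact: orb_sub sGH hy.
Qed.

End Main.

Theorem theorem1p13 (n : nat) (G H : {group {perm 'I_n}}) (X : Type)
    (ent : (X -> X -> Prop) -> Prop) :
  G \subset H ->
  is_ballean ent ->
  normal_ballean (sym_ent ent G) ->
  normal_ballean (sym_ent ent H).
Proof.
move=> sGH hb hN A B hAB.
have [U' [V' [hU hV hd]]] := hN _ _ (disj_pull sGH hb hAB).
exists (Uof U'), (Uof V'); split.
- exact: nbhd_push.
- exact: nbhd_push.
- case=> s [x hx] [hu hv]; apply: (hd (qq G x)); split; [exact: hu| exact: hv].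
Qed.
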